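(* Let $q$ be an acyclic Boolean conjunctive query such that each cycle of the attack graph of $q$ is terminal and each atom of $q$ belongs to a cycle of the attack graph. Then: (1) if the same variable $x$ occurs in (atoms of) two distinct cycles of the attack graph, then $x\in\mathit{key}(F)$ for each atom $F$ in these cycles; (2) if $F\to G$ is a weak attack, then $\mathit{key}(G)\subseteq\mathit{vars}(F)$.
   Context: Atoms have variables or constants as arguments; each relation name has a signature $[n,k]$ with primary key positions $1,\dots,k$. $\mathit{key}(F)$ is the set of variables in the primary-key positions of atom $F$, $\mathit{vars}(F)$ its set of variables. A Boolean conjunctive query $q$ is a finite set of atoms; $\mathit{vars}(q)$ its variables. A join tree for $q$ is an undirected tree on the atoms of $q$ such that whenever a variable occurs in atoms $F$ and $G$ it occurs in every atom on the path between them; the edge between $F$ and $G$ is labeled $\mathit{vars}(F)\cap\mathit{vars}(G)$. $q$ is acyclic if it has a join tree. $\mathit{FD}(q)=\{\mathit{key}(F)\to\mathit{vars}(F)\mid F\in q\}$; $F^{+,q}=\{x\in\mathit{vars}(q)\mid \mathit{FD}(q\setminus\{F\})\models\mathit{key}(F)\to x\}$; $F^{\oplus,q}=\{x\in\mathit{vars}(q)\mid \mathit{FD}(q)\models\mathit{key}(F)\to x\}$. The attack graph of $q$, computed from any join tree $\tau$ (independent of the choice), has an edge (attack) $F\to G$ for distinct atoms iff every label $L$ on the path between $F$ and $G$ in $\tau$ satisfies $L\not\subseteq F^{+,q}$. An attack $F\to G$ is weak if $\mathit{key}(G)\subseteq F^{\oplus,q}$. A cycle is a sequence of edges $F_0\to\dots\to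 F_{n-1}\to F_0$ with pairwise distinct $F_i$; it is terminal if there is no edge from a vertex of the cycle to a vertex outside the cycle. *)

(* Defs.v *)
From mathcomp Require Import all_boot.
Set Implicit Arguments. Unset Strict Implicit. Unset Printing Implicit Defensive.

(* A term is a variable (inl) or a constant (inr).
   The signature [n,k] of a relation name R is given by sg R = (n, k):
   arity n, primary-key positions 1..k. *)
Definition atom (Rn V C : eqType) : eqType := (Rn * seq (V + C))%type.

Definition term_vars (V C : eqType) (s : seq (V + C)) : seq V :=
  pmap (fun t => if t is inl x then Some x else None) s.

Definition avars (Rn V C : eqType) (F : atom Rn V C) : seq V := term_vars F.2.

Definition akey (Rn V C : eqType) (sg : Rn -> nat * nat) (F : atom Rn V C) : seq V :=
  term_vars (take (sg F.1).2 F.2).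

Definition qvars (Rn V C : eqType) (q : seq (atom Rn V C)) : seq V :=
  flatten (map (@avars Rn V C) q).

Definition FDq (Rn V C : eqType) (sg : Rn -> nat * nat) (q : seq (atom Rn V C))
  : seq (seq V * seq V) := [seq (akey sg F, avars F) | F <- q].

(* Logical implication  S |= X -> x  of functional dependencies, via the
   (Armstrong-sound-and-complete) attribute closure of X under S. *)
Inductive implied (V : eqType) (S : seq (seq V * seq V)) (X : seq V) : V -> Prop :=
| impl_base x : x \in X -> implied S X x
| impl_step (Y Z : seq V) x :
    (Y, Z) \in S -> (forall y, y \in Y -> implied S X y) -> x \in Z -> implied S X x.

Definition Fplus (Rn V C : eqType) (sg : Rn -> nat * nat) (q : seq (atom Rn V C))
  (F : atom Rn V C) (x : V) : Prop :=
  x \in qvars q /\ implied (FDq sg [seq H <- q | H != F]) (akey sg F) x.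

Definition Foplus (Rn V C : eqType) (sg : Rn -> nat * nat) (q : seq (atom Rn V C))
  (F : atom Rn V C) (x : V) : Prop :=
  x \in qvars q /\ implied (FDq sg q) (akey sg F) x.

Definition adj (T : eqType) (tau : seq (T * T)) (F G : T) : bool :=
  ((F, G) \in tau) || ((G, F) \in tau).

Definition spath (T : eqType) (tau : seq (T * T)) (F G : T) (p : seq T) : Prop :=
  [/\ path (adj tau) F p, last F p = G & uniq (F :: p)].

(* tau is a join tree for q: a tree on the atoms of q (between any two atoms
   there is exactly one simple path) with the connectedness condition. *)
Definition is_join_tree (Rn V C : eqType) (q : seq (atom Rn V C))
  (tau : seq (atom Rn V C * atom Rn V C)) : Prop :=
  [/\ (forall F G, (F, G) \in tau -> [/\ F \in q, G \in q & F != G]),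
      (forall F G, F \in q -> G \in q -> exists! p, spath tau F G p) &
      (forall x F G p, F \in q -> G \in q -> x \in avars F -> x \in avars G ->
         spath tau F G p -> forall H, H \in F :: p -> x \in avars H)].

Definition label (Rn V C : eqType) (F G : atom Rn V C) : seq V :=
  [seq x <- avars F | x \in avars G].

Definition attack (Rn V C : eqType) (sg : Rn -> nat * nat) (q : seq (atom Rn V C))
  (tau : seq (atom Rn V C * atom Rn V C)) (F G : atom Rn V C) : Prop :=
  [/\ F \in q, G \in q, F != G &
      exists p, spath tau F G p /\
        forall H H', (H, H') \in zip (F :: p) p ->
          ~ (forall x, x \in label H H' -> Fplus sg q F x)].

Definition weak_attack (Rn V C : eqType) (sg : Rn -> nat * nat) (q : seq (atom Rn V C))
  (tau : seq (atom Rn V C * atom Rn V C)) (F G : atom Rn V C) : Prop :=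
  attack sg q tau F G /\ (forall x, x \in akey sg G -> Foplus sg q F x).

Fixpoint ppath (T : Type) (e : T -> T -> Prop) (x : T) (p : seq T) : Prop :=
  match p with
  | [::] => True
  | y :: p' => e x y /\ ppath e y p'
  end.

(* c = [F_0; ...; F_{n-1}] is a cycle F_0 -> ... -> F_{n-1} -> F_0 with pairwise
   distinct vertices *)
Definition is_cycle (T : eqType) (e : T -> T -> Prop) (c : seq T) : Prop :=
  match c with
  | [::] => False
  | x :: p => uniq c /\ ppath e x (rcons p x)
  end.

Definition terminal (T : eqType) (e : T -> T -> Prop) (c : seq T) : Prop :=
  forall F G, F \in c -> e F G -> G \in c.

(* Main.v *)
Require Import Defs.
From mathcomp Require Import all_boot.
From Stdlib Require Import ClassicalEpsilon Classical.
Set Implicit Arguments. Unset Strict Implicit. Unset Printing Implicit Defensive.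



Lemma first_intro (T : eqType) (S : seq (seq T * seq T)) X x :
  implied S X x -> x \notin X -> exists Y Z, [/\ (Y,Z) \in S,
    (forall y, y \in Y -> implied S X y), x \in Z & x \notin Y].
Proof.
elim=> [y Hy|Y Z y HYZ Hall IH Hy] Hn; first by rewrite Hy in Hn.
case Hyy: (y \in Y); first exact: IH.
by exists Y, Z; split => //; rewrite Hyy.
Qed.

Fixpoint ppath_cat (T : Type) (e : T -> T -> Prop) x s1 s2 :
  ppath e x (s1 ++ s2) <-> ppath e x s1 /\ ppath e (last x s1) s2.
Proof.
case: s1 => [|y s1] /=; first by tauto.
have := ppath_cat T e y s1 s2; tauto.
Qed.

Lemma edges_last' (T : eqType) (x : T) p y : (last x p, y) \in zip (x :: rcons p y) (rcons p y).
Proof.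
elim: p x => [|a p IH] x /=; first by rewrite inE.
by rewrite inE IH orbT.
Qed.

Lemma edges_cat (T : eqType) (x : T) s t e : e \in zip (x :: s) s -> e \in zip (x :: s ++ t) (s ++ t).
Proof.
elim: s x => [|a s IH] x //=.
by rewrite !inE => /orP [->|/IH ->] //; rewrite orbT.
Qed.

Lemma edges_mem (T : eqType) (x : T) s a b : (a, b) \in zip (x :: s) s -> a \in x :: s /\ b \in x :: s.
Proof.
elim: s x => [|c s IH] x //=.
rewrite !inE => /orP [/eqP [-> ->]|/IH [H1 H2]]; first by rewrite !eqxx orbT.
by move: H1 H2; rewrite !inE => -> ->; rewrite !orbT.
Qed.

Lemma count_lt (T : eqType) (a b : pred T) s y :
  (forall z, a z -> b z) -> y \in s -> b y -> ~~ a y -> count a s < count b s.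
Proof.
move=> Hab; elim: s => [|z s IH] //=.
rewrite inE => /orP [/eqP <-|Hy] Hb Ha.
  rewrite Hb (negbTE Ha) /= add0n add1n ltnS; exact: sub_count.
have := IH Hy Hb Ha; case Haz: (a z); first by rewrite (Hab _ Haz).
by case: (b z) => /=; rewrite ?add0n ?add1n // => /ltnW; rewrite -ltnS.
Qed.



Section S.
Variables (Rn V C : eqType) (sg : Rn -> nat * nat) (q : seq (atom Rn V C))
  (tau : seq (atom Rn V C * atom Rn V C)).
Local Notation A := (atom Rn V C).
Local Notation att := (attack sg q tau).
Local Notation Fp := (Fplus sg q).
Variable Htree : is_join_tree q tau.

Lemma key_vars (F : A) x : x \in akey sg F -> x \in avars F.
Proof.
rewrite /akey /avars /term_vars !mem_pmap => /mapP [t Ht ->].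
by apply/mapP; exists t => //; apply: mem_take Ht.
Qed.

Lemma vars_q (F : A) x : F \in q -> x \in avars F -> x \in qvars q.
Proof. by move=> Fq Hx; apply/flattenP; exists (avars F) => //; apply: map_f. Qed.

Lemma label_mem (a b : A) x : x \in label a b = (x \in avars a) && (x \in avars b).
Proof. by rewrite /label mem_filter andbC. Qed.

Lemma fireP (F U : A) x : U \in q -> U != F -> (forall y, y \in akey sg U -> Fp F y) ->
  x \in avars U -> Fp F x.
Proof.
move=> Uq UF Hk Hx; split; first exact: vars_q Hx.
apply: (impl_step (Y := akey sg U) (Z := avars U)) => //.
  by apply: map_f; rewrite mem_filter UF.
by move=> y /Hk [].
Qed.

Lemma FD_mem (s : seq A) Y Z : (Y,Z) \in FDq sg s -> exists2 U, U \in s & Y = akey sg U /\ Z = avars U.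
Proof. by move=> /mapP [U HU [-> ->]]; exists U. Qed.

Lemma adj_q (F G : A) : adj tau F G -> F \in q /\ G \in q.
Proof.
case: Htree => H1 _ _; rewrite /adj => /orP [] /H1 [] -> -> //.
Qed.

Lemma path_q (F : A) p : path (adj tau) F p -> forall H, H \in p -> H \in q.
Proof.
elim: p F => [|a p IH] F //= /andP [Ha Hp] H; rewrite inE => /orP [/eqP ->|HH].
  by case: (adj_q Ha).
exact: (IH _ Hp H HH).
Qed.

Lemma A1 (F G : A) : att F G -> ~ (forall y, y \in akey sg G -> Fp F y).
Proof.
case=> Fq Gq FG [p [[Hpath Hlast Hu] Hlab]] Hk.
have Hp : p != [::] by apply/eqP => Hp; move: Hlast FG; rewrite Hp /= => ->; rewrite eqxx.
move: Hpath Hlast Hu Hlab; case/lastP: p Hp => [|p' g] // _ _.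
rewrite last_rcons => Eg _ Hlab; subst g.
apply: (Hlab _ _ (edges_last' F p' G)) => x; rewrite label_mem => /andP [_ Hx].
apply: fireP Hx => //; by rewrite eq_sym.
Qed.

Lemma att_pref (F G H : A) p : F \in q -> spath tau F G p ->
  (forall a b, (a,b) \in zip (F::p) p -> ~ (forall x, x \in label a b -> Fp F x)) ->
  H \in p -> att F H.
Proof.
move=> Fq [Hpath Hlast Hu] Hlab Hp.
have Hq := path_q Hpath Hp.
have HF : F != H by apply/eqP => E; move: Hu; rewrite /= E Hp.
split => //; move: Hpath Hu Hlab; case/splitPr: Hp => p1 p2 Hpath Hu Hlab.
exists (rcons p1 H); split; first split.
- by move: Hpath; rewrite -cat_rcons cat_path => /andP [].
- by rewrite last_rcons.
- by move: Hu; rewrite -cat_rcons -cat_cons cat_uniq => /andP [].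
- move=> a b Hab; apply: Hlab; rewrite -cat_rcons; exact: edges_cat.
Qed.
End S.



Section S.
Variables (Rn V C : eqType) (sg : Rn -> nat * nat) (q : seq (atom Rn V C))
  (tau : seq (atom Rn V C * atom Rn V C)).
Local Notation A := (atom Rn V C).
Local Notation att := (attack sg q tau).
Local Notation Fp := (Fplus sg q).
Variable Htree : is_join_tree q tau.

Lemma spath_uniq (F G : A) p1 p2 : F \in q -> G \in q -> spath tau F G p1 -> spath tau F G p2 -> p1 = p2.
Proof.
case: Htree => _ H2 _ Fq Gq S1 S2; case: (H2 _ _ Fq Gq) => p [_ Hu].
by rewrite -(Hu _ S1) -(Hu _ S2).
Qed.

Lemma spath_ex (F G : A) : F \in q -> G \in q -> exists p, spath tau F G p.
Proof. by case: Htree => _ H2 _ Fq Gq; case: (H2 _ _ Fq Gq) => p [Hp _]; exists p. Qed.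

Lemma conn (F G : A) p x : F \in q -> G \in q -> x \in avars F -> x \in avars G ->
  spath tau F G p -> forall H, H \in F :: p -> x \in avars H.
Proof. by case: Htree => _ _ H3; apply: H3. Qed.

Lemma adj_sym (F G : A) : adj tau F G = adj tau G F.
Proof. by rewrite /adj orbC. Qed.

Definition pairR (W W' : A) := [/\ W' \in q, att W W', att W' W, adj tau W W' &
  ((forall H, att W H -> H = W') /\ (forall H, att W' H -> H = W))].

Lemma pairR_sym (W W' : A) : pairR W W' -> pairR W' W.
Proof.
case=> Wq a1 a2 ad [u1 u2]; split => //; last by rewrite adj_sym.
by case: a1.
Qed.

Lemma pairR_q (W W' : A) : pairR W W' -> W \in q.
Proof. by case=> _ [] . Qed.

Lemma lab_not (W W' : A) : pairR W W' -> ~ (forall x, x \in label W W' -> Fp W x).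
Proof.
case=> W'q [Wq _ WW [p [Sp Hlab]]] _ ad _.
have Sp' : spath tau W W' [:: W'] by split => //=; rewrite ?ad ?inE ?WW.
rewrite (spath_uniq Wq W'q Sp Sp') in Hlab.
by apply: Hlab; rewrite inE.
Qed.

Lemma lemB (W W' M H : A) x : pairR W W' -> M \in [:: W; W'] -> x \in avars M ->
  H \in q -> H != W -> H != W' -> x \in avars H -> Fp W x.
Proof.
move=> HP HM HxM Hq HW HW' HxH.
have Wq := pairR_q HP.
have HP' := HP; case: HP' => W'q _ _ ad [u1 _].
have natt : ~ att W H by move=> /u1 E; rewrite E eqxx in HW'.
suff [p [Sp Pall]] : exists p, spath tau W H p /\
   forall a b, (a,b) \in zip (W :: p) p -> (a,b) != (W,W') -> x \in avars a /\ x \in avars b.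
  apply: NNPP => Hn; apply: natt; split => //; first by rewrite eq_sym.
  exists p; split => // a b Hab Hsub.
  case: (eqVneq (a,b) (W,W')) => [Eab|Hne]; first by case: Eab Hsub => -> -> ; exact: (lab_not HP).
  case: (Pall _ _ Hab Hne) => Ha Hb; apply: Hn; apply: Hsub; by rewrite label_mem Ha Hb.
move: HM; rewrite !inE => /orP [] /eqP EM; subst M.
  have [p Sp] := spath_ex Wq Hq; exists p; split => // a b Hab _.
  have := conn Wq Hq HxM HxH Sp; case: (edges_mem Hab) => Ha Hb Hc; split; exact: Hc.
have [p Sp] := spath_ex W'q Hq.
have Hc := conn W'q Hq HxM HxH Sp.
case: Sp => Hpath Hlast Hu.
case HWp: (W \in p).
  move: Hpath Hlast Hu Hc; case/splitPr: HWp => p1 p2 Hpath Hlast Hu Hc.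
  exists p2; split; first split.
  - by move: Hpath; rewrite cat_path => /andP [_] /=; case/andP.
  - by rewrite -Hlast last_cat.
  - by move: Hu; rewrite -cat_cons cat_uniq => /and3P [].
  - move=> a b Hab _; case: (edges_mem Hab) => Ha Hb; split; apply: Hc;
     rewrite -cat_cons mem_cat orbC; [move: Ha|move: Hb]; by move=> ->.
exists (W' :: p); split; first split.
- by rewrite /= ad Hpath.
- by [].
- rewrite cons_uniq Hu andbT inE negb_or HWp andbT.
  by case: (HP) => _ [] _ _ ->.
- move=> a b; rewrite /= inE => /orP [/eqP -> /eqP //|Hab _].
  case: (edges_mem Hab) => Ha Hb; split; exact: Hc.
Qed.
End S.



Section S.
Variables (Rn V C : eqType) (sg : Rn -> nat * nat) (q : seq (atom Rn V C))
  (tau : seq (atom Rn V C * atom Rn V C)).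
Local Notation A := (atom Rn V C).
Local Notation att := (attack sg q tau).
Local Notation Fp := (Fplus sg q).
Local Notation pairR := (pairR sg q tau).
Variable Htree : is_join_tree q tau.
Variable HPall : forall U, U \in q -> exists U', pairR U U'.

Definition Cl (W W' : A) y := Fp W y /\ Fp W' y.

Lemma full_closed (W W' U : A) : pairR W W' -> U \in q ->
  (forall y, y \in akey sg U -> Cl W W' y) -> forall y, y \in avars U -> Cl W W' y.
Proof.
move=> HP Uq Hk y Hy; case: (HP) => W'q a1 a2 _ _.
case: (eqVneq U W) => [EU|UW].
  by exfalso; apply: (A1 a2); rewrite -EU => z /Hk [].
case: (eqVneq U W') => [EU|UW'].
  by exfalso; apply: (A1 a1); rewrite -EU => z /Hk [].
split; apply: fireP Hy => // z /Hk []//.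
Qed.

Lemma loc (W W' : A) y : pairR W W' ->
  implied (FDq sg [seq H <- q | H != W]) (akey sg W) y -> y \in akey sg W \/ Cl W W' y.
Proof.
move=> HP; have Wq := pairR_q HP.
elim => [z Hz|Y Z z HYZ Hall IH Hz]; first by left.
right; case: (FD_mem HYZ) => U; rewrite mem_filter => /andP [UW Uq] [EY EZ]; subst Y Z.
case: (HP) => W'q a1 a2 _ _.
case: (eqVneq U W') => [EU|UW'].
  exfalso; apply: (A1 a1); rewrite -EU => w Hw; split; last exact: (Hall _ Hw).
  by apply: (vars_q Uq); exact: (key_vars Hw).
apply: (full_closed HP Uq) Hz => w Hw.
case: (IH _ Hw) => // HwW.
have HwV := key_vars HwW; have HwU := key_vars Hw.
split.
  by apply: (lemB Htree HP (M := W) (H := U)) => //; rewrite inE eqxx.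
by apply: (lemB Htree (pairR_sym HP) (M := W) (H := U)) => //; rewrite !inE eqxx orbT.
Qed.

Lemma keyC (W W' U : A) : pairR W W' -> U \in q -> U != W -> U != W' ->
  (forall y, y \in akey sg U -> Fp W y) -> forall y, y \in akey sg U -> Cl W W' y.
Proof.
move=> HP Uq UW UW' Hk y Hy.
case: (loc HP (proj2 (Hk _ Hy))) => // HwW.
have HwV := key_vars HwW; have HwU := key_vars Hy.
split.
  by apply: (lemB Htree HP (M := W) (H := U)) => //; rewrite inE eqxx.
by apply: (lemB Htree (pairR_sym HP) (M := W) (H := U)) => //; rewrite !inE eqxx orbT.
Qed.

Lemma subCl (W W' U : A) y : pairR W W' -> U \in q ->
  (forall y, y \in akey sg U -> Cl W W' y) -> Fp U y -> Cl W W' y.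
Proof.
move=> HP Uq Hk [_ Hi]; elim: Hi => [z Hz|Y Z z HYZ Hall IH Hz]; first exact: Hk.
case: (FD_mem HYZ) => U'; rewrite mem_filter => /andP [_ U'q] [EY EZ]; subst Y Z.
exact: (full_closed HP U'q IH).
Qed.

Definition dec (P : Prop) : bool := if excluded_middle_informative P then true else false.
Lemma decP (P : Prop) : dec P <-> P.
Proof. by rewrite /dec; case: excluded_middle_informative. Qed.

Definition mC (W W' : A) := count (fun y => dec (Cl W W' y)) (undup (qvars q)).

Lemma lemK n : forall (W W' : A), mC W W' < n -> pairR W W' ->
  forall z (M H : A), M \in [:: W; W'] -> z \in avars M -> H \in q -> H != W -> H != W' ->
  z \in avars H -> z \in akey sg W.
Proof.
elim: n => [|n IHn] W W' //= Hm HP z M H HM HzM Hq HW HW' HzH.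
apply/negPn/negP => Hz.
have Wq := pairR_q HP.
have [Hzq Hi] := lemB Htree HP HM HzM Hq HW HW' HzH.
case: (first_intro Hi Hz) => Y [Z [HYZ Hall HzZ HzY]].
case: (FD_mem HYZ) => U; rewrite mem_filter => /andP [UW Uq] [EY EZ]; subst Y Z.
case: (HP) => W'q a1 a2 _ [u1 u2].
have UW' : U != W'.
  apply/eqP => EU; apply: (A1 a1); rewrite -EU => w Hw; split; last exact: (Hall _ Hw).
  by apply: (vars_q Uq); exact: (key_vars Hw).
have HkU : forall y, y \in akey sg U -> Cl W W' y.
  apply: (keyC HP Uq UW UW') => w Hw; split; last exact: (Hall _ Hw).
  by apply: (vars_q Uq); exact: (key_vars Hw).
case: (HPall Uq) => U' HPU; case: (HPU) => U'q b1 b2 _ [v1 v2].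
have U'W : U' != W.
  by apply/eqP => E; subst U'; have := u1 _ b2; move/eqP; rewrite (negbTE UW').
have U'W' : U' != W'.
  by apply/eqP => E; subst U'; have := u2 _ b2; move/eqP; rewrite (negbTE UW).
have HMU : M != U by move: HM; rewrite !inE => /orP [] /eqP ->; rewrite eq_sym.
have HMU' : M != U' by move: HM; rewrite !inE => /orP [] /eqP ->; rewrite eq_sym.
have HMq : M \in q by move: HM; rewrite !inE => /orP [] /eqP ->.
apply: (negP HzY); apply: (IHn U U' _ HPU z U M) => //; last by rewrite inE eqxx.
apply: (@leq_trans (mC W W')); last by rewrite -ltnS.
have [y [Hy Hny]] : exists y, y \in akey sg U /\ ~ Fp U' y.
  apply: NNPP => Hn; apply: (A1 b2) => y Hy; apply: NNPP => Hn'; apply: Hn; by exists y.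
apply: (count_lt (y := y)).
- move=> w /= Hw; apply/decP; case/decP: Hw => H1 _; exact: (subCl HP Uq HkU H1).
- by rewrite mem_undup; apply: (vars_q Uq); exact: (key_vars Hy).
- by rewrite /=; apply/decP; apply: HkU.
- by rewrite /=; apply/negP => /decP [].
Qed.
End S.



Lemma ppath_rcons (T : Type) (e : T -> T -> Prop) x s y :
  ppath e x (rcons s y) <-> ppath e x s /\ e (last x s) y.
Proof. rewrite -cats1 ppath_cat /=; tauto. Qed.

Lemma rot_cycle (T : eqType) (e : T -> T -> Prop) c1 X c2 :
  is_cycle e (c1 ++ X :: c2) -> is_cycle e (X :: c2 ++ c1).
Proof.
case: c1 => [|y c1]; first by rewrite cats0.
move=> [Hu Hp]; split.
  have -> : X :: c2 ++ y :: c1 = rot (size (y :: c1)) ((y :: c1) ++ X :: c2) by rewrite rot_size_cat.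
  by rewrite rot_uniq.
move: Hp; rewrite !rcons_cat /= !ppath_cat /= !ppath_rcons; tauto.
Qed.

Section S.
Variables (Rn V C : eqType) (sg : Rn -> nat * nat) (q : seq (atom Rn V C))
  (tau : seq (atom Rn V C * atom Rn V C)).
Local Notation A := (atom Rn V C).
Local Notation att := (attack sg q tau).
Local Notation Fp := (Fplus sg q).
Local Notation pairR := (pairR sg q tau).
Variable Htree : is_join_tree q tau.
Variable HT : forall c, is_cycle att c -> terminal att c.
Variable HC : forall F, F \in q -> exists c, is_cycle att c /\ F \in c.

Lemma att_neq (F G : A) : att F G -> F != G.
Proof. by case. Qed.

Lemma chord (W a H : A) r : is_cycle att (W :: a :: r) -> att W H -> H = a.
Proof.
move=> Hc HWH; have Hc' := Hc; case: Hc' => Hu Hp.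
have := HT Hc (mem_head _ _) HWH; rewrite inE => /orP [/eqP E|].
  by move: (att_neq HWH); rewrite E eqxx.
rewrite inE => /orP [/eqP //|Hr].
case: (eqVneq H a) => // Ha; exfalso.
move: Hu Hp; case/splitPr: Hr => r1 r2 Hu Hp.
have Ha2 : a \notin r2.
  move: Hu => /= /andP [_ /andP [Ha' _]]; apply: contra Ha' => Har.
  by rewrite mem_cat inE Har !orbT.
have HWa : W != a.
  by move: Hu => /= /andP [HW _]; apply: contraNneq HW => ->; exact: mem_head.
have Hc2 : is_cycle att (W :: H :: r2).
  split.
    apply: (subseq_uniq _ Hu); rewrite /= eqxx (negbTE Ha); exact: suffix_subseq.
  move: Hp; rewrite /= rcons_cat /= ppath_cat /=; tauto.
have Hwa : att W a by move: Hp => /= [].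
have := HT Hc2 (mem_head _ _) Hwa; rewrite !inE => /or3P [/eqP E|/eqP E|Har].
- by rewrite E eqxx in HWa.
- by rewrite E eqxx in Ha.
- by rewrite Har in Ha2.
Qed.

Lemma uniqT (X H1 H2 : A) : X \in q -> att X H1 -> att X H2 -> H1 = H2.
Proof.
move=> Xq h1 h2; case: (HC Xq) => c [Hc Xc].
move: Hc; case/splitPr: Xc => c1 c2 /rot_cycle.
case E: (c2 ++ c1) => [|a r].
  by case=> _ /= [/att_neq]; rewrite eqxx.
by move=> Hc; rewrite (chord Hc h1) (chord Hc h2).
Qed.

Lemma attAdj (X Y : A) : att X Y -> adj tau X Y.
Proof.
move=> h; have h' := h; case: h' => Xq Yq XY [p [[Hpath Hlast Hu] Hlab]].
have Hall : forall H, H \in p -> H = Y.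
  move=> H Hp; apply: (uniqT Xq _ h); exact: (att_pref Htree Xq (And3 Hpath Hlast Hu) Hlab Hp).
clear Hlab; case: p Hpath Hlast Hu Hall => [|b p] /=.
  by move=> _ E; rewrite E eqxx in XY.
move=> /andP [Hb _] _ Hu Hall; by rewrite -(Hall b (mem_head _ _)).
Qed.

Lemma ppath_adj (x : A) s : ppath att x s -> path (adj tau) x s.
Proof.
elim: s x => [|y s IH] x //= [h Hp]; rewrite (attAdj h); exact: IH.
Qed.

Lemma cycle2 c : is_cycle att c -> exists a b, c = [:: a; b] /\ att a b /\ att b a.
Proof.
case: c => [|a [|b [|d r]]] //.
- by case=> _ /= [/att_neq]; rewrite eqxx.
- by case=> _ /= [h1 [h2 _]]; exists a, b.
case=> Hu Hp; exfalso.
have [aq bq] : a \in q /\ b \in q by case: Hp => [[]].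
have := ppath_adj Hp; rewrite /= => /andP [Hab Hpath].
have S1 : spath tau b a (rcons (d :: r) a).
  split => //; first by rewrite last_rcons.
  have -> : b :: rcons (d :: r) a = rcons (b :: d :: r) a by [].
  by rewrite rcons_uniq.
have S2 : spath tau b a [:: a].
  split => //=; last by rewrite andbT inE; move: Hu => /= /andP []; rewrite inE negb_or eq_sym => /andP [].
  by rewrite adj_sym Hab.
have := spath_uniq Htree bq aq S1 S2; move/(congr1 size); by rewrite size_rcons.
Qed.

Lemma mkpair (a b : A) : att a b -> att b a -> pairR a b.
Proof.
move=> ab ba; have aq : a \in q by case: ab.
have bq : b \in q by case: ab.
split => //; first exact: attAdj.
by split => H h; [exact: (uniqT aq h ab) | exact: (uniqT bq h ba)].
Qed.

Lemma pair_ex (U : A) : U \in q -> exists U', pairR U U'.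
Proof.
move=> Uq; case: (HC Uq) => c [Hc Uc]; case: (cycle2 Hc) => a [b [E [ab ba]]]; subst c.
move: Uc; rewrite !inE => /orP [] /eqP ->; [exists b | exists a]; exact: mkpair.
Qed.
End S.

Theorem lemma7 (Rn V C : eqType) (sg : Rn -> nat * nat)
  (q : seq (atom Rn V C)) (tau : seq (atom Rn V C * atom Rn V C)) :
  uniq q ->
  (forall F, F \in q -> 1 <= (sg F.1).2 <= (sg F.1).1 /\ size F.2 = (sg F.1).1) ->
  is_join_tree q tau ->
  (forall c, is_cycle (attack sg q tau) c -> terminal (attack sg q tau) c) ->
  (forall F, F \in q -> exists c, is_cycle (attack sg q tau) c /\ F \in c) ->
  (forall (c1 c2 : seq (atom Rn V C)) (x : V),
      is_cycle (attack sg q tau) c1 -> is_cycle (attack sg q tau) c2 ->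
      (forall i, c2 <> rot i c1) ->
      (exists F1, F1 \in c1 /\ x \in avars F1) ->
      (exists F2, F2 \in c2 /\ x \in avars F2) ->
      forall F, F \in c1 ++ c2 -> x \in akey sg F)
  /\
  (forall F G, weak_attack sg q tau F G ->
      forall x, x \in akey sg G -> x \in avars F).
Proof.
move=> _ _ Htree HT HC.
have HPall := pair_ex Htree HT HC.
have Kl : forall W W', pairR sg q tau W W' -> forall z (M H : atom Rn V C), M \in [:: W; W'] ->
    z \in avars M -> H \in q -> H != W -> H != W' -> z \in avars H -> z \in akey sg W.
  by move=> W W' HP; apply: (lemK Htree HPall (ltnSn _) HP).
split.
  move=> c1 c2 x Hc1 Hc2 Hrot [F1 [HF1 HxF1]] [F2 [HF2 HxF2]] F HF.
  case: (cycle2 Htree HT HC Hc1) => a [b [E1 [ab ba]]].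
  case: (cycle2 Htree HT HC Hc2) => c [d [E2 [cd dc]]]; subst c1 c2.
  have aq : a \in q by case: ab.
  have bq : b \in q by case: ab.
  have cq : c \in q by case: cd.
  have dq : d \in q by case: cd.
  have U := uniqT HT HC.
  have Rab : [:: c; d] <> [:: a; b] by move=> E; apply: (Hrot 0); rewrite rot0.
  have Rba : [:: c; d] <> [:: b; a] by move=> E; apply: (Hrot 1); rewrite E.
  have ca : c != a by apply/eqP => E; subst c; apply: Rab; rewrite (U _ _ _ aq cd ab).
  have cb : c != b by apply/eqP => E; subst c; apply: Rba; rewrite (U _ _ _ bq cd ba).
  have da : d != a by apply/eqP => E; subst d; apply: Rba; rewrite (U _ _ _ aq dc ab).
  have db : d != b by apply/eqP => E; subst d; apply: Rab; rewrite (U _ _ _ bq dc ba).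
  have Pab := mkpair Htree HT HC ab ba.
  have Pba := mkpair Htree HT HC ba ab.
  have Pcd := mkpair Htree HT HC cd dc.
  have Pdc := mkpair Htree HT HC dc cd.
  have F1q : F1 \in q by move: HF1; rewrite !inE => /orP [] /eqP ->.
  have F2q : F2 \in q by move: HF2; rewrite !inE => /orP [] /eqP ->.
  move: HF; rewrite mem_cat !inE => /orP [] /orP [] /eqP ->.
  - apply: (Kl _ _ Pab x F1 F2) => //; move: HF2; rewrite !inE => /orP [] /eqP -> //; by rewrite eq_sym.
  - apply: (Kl _ _ Pba x F1 F2) => //; last 2 first.
    + by move: HF2; rewrite !inE => /orP [] /eqP -> //; rewrite eq_sym.
    + by move: HF2; rewrite !inE => /orP [] /eqP -> //; rewrite eq_sym.
    by move: HF1; rewrite !inE orbC.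
  - apply: (Kl _ _ Pcd x F2 F1) => //; move: HF1; rewrite !inE => /orP [] /eqP -> //; by rewrite eq_sym.
  - apply: (Kl _ _ Pdc x F2 F1) => //; last 2 first.
    + by move: HF1; rewrite !inE => /orP [] /eqP -> //; rewrite eq_sym.
    + by move: HF1; rewrite !inE => /orP [] /eqP -> //; rewrite eq_sym.
    by move: HF2; rewrite !inE orbC.
move=> F G [hFG Hk] x Hx; apply/negPn/negP => Hn.
have [_ Hi] := Hk x Hx.
have HnK : x \notin akey sg F by apply: contra Hn; exact: key_vars.
case: (first_intro Hi HnK) => Y [Z [HYZ Hall HxZ HxY]].
case: (FD_mem HYZ) => U Uq [EY EZ]; subst Y Z.
have UF : U != F by apply/eqP => E; subst U; rewrite HxZ in Hn.
have UG : U != G by apply/eqP => E; subst U; rewrite Hx in HxY.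
have Fq : F \in q by case: hFG.
have Gq : G \in q by case: hFG.
case: (HPall _ Uq) => U' HPU.
case: (HPall _ Fq) => F' [_ _ a2 _ [u1 _]].
have EG := u1 _ hFG; subst F'.
have GU' : G != U'.
  apply/eqP => E; subst U'; case: HPU => _ _ _ _ [_ v2].
  by move: UF; rewrite (v2 _ a2) eqxx.
apply: (negP HxY); apply: (Kl _ _ HPU x U G) => //; first by rewrite inE eqxx.
- by rewrite eq_sym.
- exact: key_vars Hx.
Qed.
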